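(* Let $G \leq \mathrm{Aut}(K_{n,n})$ be a subgroup isomorphic to $A_4$. Suppose there is an embedding $\Gamma$ of $K_{n,n}$ in $S^3$ such that $G$ is induced on $\Gamma$ by an isomorphic subgroup $\widehat{G} \leq \mathrm{SO}(4)$. Let $n_2^v$ and $n_2^w$ denote the number of vertices of $V$, respectively of $W$, fixed by an element of order 2 of $G$ (these numbers are the same for all elements of order 2 of $G$). If $n_2^w = 0$, then $4$ divides $n_2^v$.
   Context: $K_{n,n}$ is the complete bipartite graph with vertex sets $V$, $W$ of $n$ vertices each; every vertex of $V$ is adjacent to every vertex of $W$, and there are no other edges. $S^3$ is the unit sphere in $\mathbb{R}^4$, on which $\mathrm{SO}(4)$ acts by isometries. ''$G$ is induced on $\Gamma$ by an isomorphic subgroup $\widehat{G} \leq \mathrm{SO}(4)$'' means every element of $\widehat{G}$ leaves $\Gamma$ setwise invariant, and restricting to $\Gamma$ gives an isomorphism from $\widehat{G}$ onto $G$. *)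

(* Defs.v *)
From HB Require Import structures.
From mathcomp Require Import all_boot all_order all_algebra all_fingroup all_solvable.
From mathcomp Require Import all_classical all_reals topology normedtype.
Set Implicit Arguments. Unset Strict Implicit. Unset Printing Implicit Defensive.
Import Order.TTheory GRing.Theory Num.Theory numFieldNormedType.Exports.
Local Open Scope ring_scope.
Local Open Scope classical_set_scope.

(* Vertex set of K_{n,n}: V = inl _, W = inr _ *)
Definition Knn (n : nat) : finType := ('I_n + 'I_n)%type.

Definition knn_adj n : rel (Knn n) := fun u v =>
  match u, v with
  | inl _, inr _ | inr _, inl _ => true
  | _, _ => false
  end.

Definition is_aut n (s : {perm Knn n}) : Prop :=
  forall u v : Knn n, knn_adj (s u) (s v) = knn_adj u v.

Definition S3 (R : realType) : set 'rV[R]_4 :=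
  [set x | \sum_(i < 4) x ord0 i ^+ 2 = 1].

(* SO(4), acting on row vectors by x |-> x *m A *)
Definition SO4 (R : realType) (A : 'M[R]_4) : Prop :=
  A *m A^T = 1%:M /\ \det A = 1.

Definition I01 (R : realType) : set R := [set t | 0 <= t <= 1].
Definition I01o (R : realType) : set R := [set t | 0 < t < 1].

(* An embedding of K_{n,n} in S^3: vertex points [pts], and for each edge
   (inl i, inr j) an arc [arc i j] parametrized by [0,1]. *)
Definition is_embedding (R : realType) n (pts : Knn n -> 'rV[R]_4)
    (arc : 'I_n -> 'I_n -> R -> 'rV[R]_4) : Prop :=
  [/\ injective pts,
      (forall v, S3 (pts v)),
      (forall i j, {within @I01 R, continuous arc i j}) &
   [/\ 
      (forall i j s t, I01 s -> I01 t -> arc i j s = arc i j t -> s = t),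
      (forall i j t, I01 t -> S3 (arc i j t)),
      (forall i j, arc i j 0 = pts (inl i) /\ arc i j 1 = pts (inr j)),
      (forall i j t v, I01o t -> arc i j t <> pts v) &
      (forall i j i' j' s t, I01o s -> I01o t -> (i, j) <> (i', j') ->
         arc i j s <> arc i' j' t)]].

Definition image_of (R : realType) n (pts : Knn n -> 'rV[R]_4)
    (arc : 'I_n -> 'I_n -> R -> 'rV[R]_4) : set 'rV[R]_4 :=
  range pts `|` [set x | exists i j t, I01 t /\ x = arc i j t].

(* G is induced on Gamma by an isomorphic subgroup Ghat <= SO(4):
   psi : G -> SO(4) is the inverse of the restriction isomorphism Ghat -> G.
   Permutation product g * h applies g first, matching x *m (A *m B). *)
Definition induced_by_SO4 (R : realType) n (G : {group {perm Knn n}})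
    (pts : Knn n -> 'rV[R]_4) (arc : 'I_n -> 'I_n -> R -> 'rV[R]_4) : Prop :=
  exists psi : {perm Knn n} -> 'M[R]_4,
    [/\ {in G &, forall g h, psi (g * h)%g = psi g *m psi h},
        {in G &, injective psi},
        {in G, forall g, SO4 (psi g)},
        {in G, forall g, (fun x => x *m psi g) @` image_of pts arc
                          = image_of pts arc} &
        {in G, forall g v, pts v *m psi g = pts (g v)}].

Definition fixV n (g : {perm Knn n}) : nat := #|[set i : 'I_n | g (inl i) == inl i]|.
Definition fixW n (g : {perm Knn n}) : nat := #|[set j : 'I_n | g (inr j) == inr j]|.

(* Main.v *)
Require Import Defs.
From HB Require Import structures.
From mathcomp Require Import all_boot all_order all_algebra all_fingroup all_solvable.
From mathcomp Require Import all_classical all_reals topology normedtype.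

Set Implicit Arguments. Unset Strict Implicit. Unset Printing Implicit Defensive.
Section Helpers.
Local Open Scope group_scope.
Definition o0 : 'I_4 := @Ordinal 4 0 isT.
Definition o1 : 'I_4 := @Ordinal 4 1 isT.
Definition o2 : 'I_4 := @Ordinal 4 2 isT.
Definition o3 : 'I_4 := @Ordinal 4 3 isT.
Lemma ord4 (i : 'I_4) : i = o0 \/ i = o1 \/ i = o2 \/ i = o3.
Proof.
case: i => [[|[|[|[|m]]]] Hm]; try by [left; apply/val_inj|right;left;apply/val_inj|
  right;right;left;apply/val_inj|right;right;right;apply/val_inj].
Qed.
Definition D1 : {perm 'I_4} := tperm o0 o1 * tperm o2 o3.
Definition D2 : {perm 'I_4} := tperm o0 o2 * tperm o1 o3.
Definition D3 : {perm 'I_4} := tperm o0 o3 * tperm o1 o2.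
Definition C : {perm 'I_4} := tperm o1 o2 * tperm o1 o3.
Lemma D12 : D1 * C = C * D2.
Proof. apply/permP => i; case: (ord4 i) => [->|[->|[->|->]]]; by rewrite !permM /tperm !permE. Qed.
Lemma D23 : D2 * C = C * D3.
Proof. apply/permP => i; case: (ord4 i) => [->|[->|[->|->]]]; by rewrite !permM /tperm !permE. Qed.
Lemma D31 : D3 * C = C * D1.
Proof. apply/permP => i; case: (ord4 i) => [->|[->|[->|->]]]; by rewrite !permM /tperm !permE. Qed.
Lemma conjC_of (a b : {perm 'I_4}) : a * C = C * b -> a ^ C = b.
Proof. by move=> E; rewrite conjgE E mulgA mulVg mul1g. Qed.
Lemma C3 : C ^+ 3 = 1.
Proof. apply/permP => i; rewrite !expgS expg0 mulg1; case: (ord4 i) => [->|[->|[->|->]]]; by rewrite !permM /tperm !permE. Qed.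
Lemma card_A4 : #|'Alt_('I_4)| = 12.
Proof. have h4 : 1 < #|'I_4| by rewrite card_ord. have := card_Alt h4. rewrite card_ord => /(congr1 (fun k => k %/ 2)). by rewrite mulKn. Qed.
Lemma stab3 (a : 'I_4) : #|'C_('Alt_('I_4))[a | 'P]| = 3.
Proof.
have tr := Alt_trans 'I_4; rewrite card_ord in tr.
have tr1 := ntransitive1 (isT : 0 < 2) tr.
have := card_orbit_stab 'P ('Alt_('I_4)) a.
rewrite (atransP tr1) ?inE // cardsT card_ord card_A4.
move=> E; apply/eqP; rewrite -(eqn_pmul2l (isT : 0 < 4)) E //.
Qed.
Lemma inv_fpf (x : {perm 'I_4}) : x \in 'Alt_('I_4) -> #[x] = 2 -> forall a, x a != a.
Proof.
move=> Ax ox a; apply/negP => /eqP xa.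
have : x \in 'C_('Alt_('I_4))[a | 'P] by rewrite inE Ax; apply/astab1P.
move/order_dvdG; by rewrite stab3 ox.
Qed.
Lemma inv_D (x : {perm 'I_4}) : x \in 'Alt_('I_4) -> #[x] = 2 -> x = D1 \/ x = D2 \/ x = D3.
Proof.
move=> Ax ox; have fp := inv_fpf Ax ox.
have iv : forall a, x (x a) = a.
  have h : x ^+ 2 = 1 by apply/eqP; rewrite -order_dvdn ox.
  by move=> a; rewrite -permM -(expg1 x) -expgS h perm1.
have f0 := fp o0; have f1 := fp o1; have f2 := fp o2; have f3 := fp o3.
have i0 := iv o0; have i1 := iv o1; have i2 := iv o2; have i3 := iv o3.
case: (ord4 (x o0)) => [E0|[E0|[E0|E0]]];
case: (ord4 (x o1)) => [E1|[E1|[E1|E1]]];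
case: (ord4 (x o2)) => [E2|[E2|[E2|E2]]];
case: (ord4 (x o3)) => [E3|[E3|[E3|E3]]];
rewrite ?E0 ?E1 ?E2 ?E3 in f0 f1 f2 f3 i0 i1 i2 i3;
rewrite ?E0 ?E1 ?E2 ?E3 in i0 i1 i2 i3;
try discriminate; try done;
[left | right; left | right; right];
apply/permP => i; case: (ord4 i) => [->|[->|[->|->]]]; rewrite ?E0 ?E1 ?E2 ?E3;
by rewrite !permM /tperm !permE.
Qed.

Lemma permP4 (p q : {perm 'I_4}) : p o0 = q o0 -> p o1 = q o1 -> p o2 = q o2 -> p o3 = q o3 -> p = q.
Proof. move=> *; apply/permP => i; by case: (ord4 i) => [->|[->|[->|->]]]. Qed.
Ltac ps := apply: permP4; by rewrite ?perm1 !permM /tperm !permE.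
Lemma P11 : D1 * D1 = 1. Proof. ps. Qed.
Lemma P22 : D2 * D2 = 1. Proof. ps. Qed.
Lemma P33 : D3 * D3 = 1. Proof. ps. Qed.
Lemma P12 : D1 * D2 = D3. Proof. ps. Qed.
Lemma P21 : D2 * D1 = D3. Proof. ps. Qed.
Lemma P13 : D1 * D3 = D2. Proof. ps. Qed.
Lemma P31 : D3 * D1 = D2. Proof. ps. Qed.
Lemma P23 : D2 * D3 = D1. Proof. ps. Qed.
Lemma P32 : D3 * D2 = D1. Proof. ps. Qed.
Definition HAs : {set {perm 'I_4}} := [set 1; D1; D2; D3].
Lemma mem4 u : u \in HAs -> u = 1 \/ u = D1 \/ u = D2 \/ u = D3.
Proof. rewrite !inE => /orP[/orP[/orP[]|]|]/eqP->; tauto. Qed.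
Lemma HAgs : group_set HAs.
Proof.
apply/group_setP; split; first by rewrite !inE eqxx.
move=> u v /mem4[->|[->|[->|->]]] /mem4[->|[->|[->|->]]]; rewrite !inE;
rewrite ?mul1g ?mulg1 ?P11 ?P22 ?P33 ?P12 ?P21 ?P13 ?P31 ?P23 ?P32; by rewrite eqxx ?orbT.
Qed.
Definition HA : {group {perm 'I_4}} := Group HAgs.
Lemma Deven1 : D1 \in 'Alt_('I_4). Proof. by rewrite Alt_even odd_permM !odd_tperm. Qed.
Lemma Deven2 : D2 \in 'Alt_('I_4). Proof. by rewrite Alt_even odd_permM !odd_tperm. Qed.
Lemma Deven3 : D3 \in 'Alt_('I_4). Proof. by rewrite Alt_even odd_permM !odd_tperm. Qed.
Lemma Ceven : C \in 'Alt_('I_4). Proof. by rewrite Alt_even odd_permM !odd_tperm. Qed.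
Lemma HAsub : HA \subset 'Alt_('I_4).
Proof. apply/fintype.subsetP => u /mem4[->|[->|[->|->]]]; by rewrite ?group1 ?Deven1 ?Deven2 ?Deven3. Qed.
Lemma N12 : D1 != D2. Proof. apply/eqP => /permP/(_ o0); rewrite !permM /tperm !permE => /(congr1 val); by []. Qed.
Lemma N13 : D1 != D3. Proof. apply/eqP => /permP/(_ o0); rewrite !permM /tperm !permE => /(congr1 val); by []. Qed.
Lemma N23 : D2 != D3. Proof. apply/eqP => /permP/(_ o0); rewrite !permM /tperm !permE => /(congr1 val); by []. Qed.

Lemma A4_klein (x : {perm 'I_4}) : x \in 'Alt_('I_4) -> #[x] = 2 ->
  [/\ x \in HA, x ^ C \in HA, (x ^ C) ^ C \in HA, C ^+ 3 = 1 &
   [/\ x * x ^ C = (x ^ C) ^ C, x ^ C != x, (x ^ C) ^ C != x, (x ^ C) ^ C != x ^ C &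
     forall h, h \in HA -> [|| h == 1, h == x, h == x ^ C | h == (x ^ C) ^ C]]].
Proof.
move=> Ax ox.
have c1 := conjC_of D12; have c2 := conjC_of D23; have c3 := conjC_of D31.
have mem1 : D1 \in HA by rewrite !inE eqxx ?orbT.
have mem2 : D2 \in HA by rewrite !inE eqxx ?orbT.
have mem3 : D3 \in HA by rewrite !inE eqxx ?orbT.
have N12' := N12; have N13' := N13; have N23' := N23.
have N21 := N12; rewrite eq_sym in N21. have N31 := N13; rewrite eq_sym in N31.
have N32 := N23; rewrite eq_sym in N32.
case: (inv_D Ax ox) => [->|[->|->]]; rewrite ?c1 ?c2 ?c3 ?c1 ?c2 ?c3;
(split; [done|done|done|exact: C3|split]);
  try by rewrite ?P12 ?P23 ?P31.
all: move=> h /mem4[->|[->|[->|->]]]; by rewrite eqxx ?orbT.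
Qed.
End Helpers.

Section Main.
Local Open Scope group_scope.

Definition isL n (v : Knn n) : bool := if v is inl _ then true else false.
Lemma adjE n (u v : Knn n) : knn_adj u v = (isL u != isL v).
Proof. by case: u; case: v. Qed.
Definition sd n (s : {perm Knn n}) (b : bool) := forall v, isL (s v) = b (+) isL v.

Lemma side n (s : {perm Knn n}) : is_aut s -> sd s false \/ sd s true.
Proof.
move=> H; case: (pickP (fun v : Knn n => isL (s v) == isL v)) => [v0 /eqP E0|N]; [left|right] => u.
  move: (H u v0); rewrite !adjE E0.
  by case: (isL (s u)); case: (isL u); case: (isL v0).
move: (N u); rewrite /=.
by case: (isL (s u)); case: (isL u).
Qed.

Lemma sdM n (s t : {perm Knn n}) b c : sd s b -> sd t c -> sd (s * t) (b (+) c).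
Proof. move=> Hs Ht v; rewrite permM Ht Hs; clear Hs Ht; by case: b; case: c; case: (isL v). Qed.
Lemma sdV n (s : {perm Knn n}) b : sd s b -> sd s^-1 b.
Proof.
move=> Hs v; have := Hs (s^-1 v); rewrite permKV.
clear Hs; move: (isL (s^-1 v)) (isL v) => p q; by case: b; case: p; case: q.
Qed.
Lemma sdJ n (s t : {perm Knn n}) b c : sd s b -> sd t c -> sd (s ^ t) b.
Proof.
move=> Hs Ht; have h := sdM (sdV Ht) (sdM Hs Ht).
move=> v; rewrite conjgE h; clear Hs Ht h; by case: b; case: c; case: (isL v).
Qed.

Lemma sd3 n (t : {perm Knn n}) : is_aut t -> t ^+ 3 = 1 -> sd t false.
Proof.
move=> Ht t3; case: (side Ht) => // Sw v; exfalso.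
have : (t ^+ 3) v = v by rewrite t3 perm1.
rewrite !expgS expg0 mulg1 !permM => /(congr1 (@isL n)).
rewrite !Sw; by case: (isL v).
Qed.

Definition Fx n (b : bool) (s : {perm Knn n}) := [set v | (isL v == b) && (s v == v)].

Lemma fixVE n (s : {perm Knn n}) : fixV s = #|[set i : 'I_n | s (inl i) == inl i]|.
Proof.
apply: eq_card => i; rewrite inE; apply/idP/idP => [/set_mem //|H].
by apply: mem_set.
Qed.
Lemma fixWE n (s : {perm Knn n}) : fixW s = #|[set i : 'I_n | s (inr i) == inr i]|.
Proof.
apply: eq_card => i; rewrite inE; apply/idP/idP => [/set_mem //|H].
by apply: mem_set.
Qed.

Lemma fixV_Fx n (s : {perm Knn n}) : fixV s = #|Fx true s|.
Proof.
rewrite fixVE.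
have inj : injective (@inl 'I_n 'I_n) by move=> a b [].
rewrite -(card_imset [set i : 'I_n | s (inl i) == inl i] inj); apply: eq_card => v; case: v => [i|j].
  by rewrite (mem_imset _ _ inj) !inE.
rewrite !inE /=; apply/imsetP => -[i _] //.
Qed.

Lemma fixW_Fx n (s : {perm Knn n}) : fixW s = #|Fx false s|.
Proof.
rewrite fixWE.
have inj : injective (@inr 'I_n 'I_n) by move=> a b [].
rewrite -(card_imset [set j : 'I_n | s (inr j) == inr j] inj); apply: eq_card => v; case: v => [i|j].
  rewrite !inE /=; apply/imsetP => -[j _] //.
by rewrite (mem_imset _ _ inj) !inE.
Qed.

Lemma Fx_conj n b (s t : {perm Knn n}) : sd t false -> #|Fx b (s ^ t)| = #|Fx b s|.
Proof.
move=> Ht; rewrite -(card_imset (Fx b s) (@perm_inj _ t)); apply: eq_card => v.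
rewrite inE; apply/andP/imsetP.
  case=> Lv /eqP E; exists (t^-1 v); last by rewrite permKV.
  rewrite inE (sdV Ht) /= Lv /=; apply/eqP; apply: (@perm_inj _ t).
  move: E; rewrite conjgE !permM => ->; by rewrite permKV.
case=> w; rewrite inE => /andP[Lw /eqP Ew] ->; split.
  by rewrite Ht.
by rewrite conjgE !permM permK Ew.
Qed.

Lemma fix1 n : fixV (1 : {perm Knn n}) = n /\ fixW (1 : {perm Knn n}) = n.
Proof.
split; rewrite ?fixVE ?fixWE -[RHS](card_ord n) -cardsT; apply: eq_card => i; by rewrite !inE perm1 eqxx.
Qed.

Lemma burn n (H : {group {perm Knn n}}) b : (forall h, h \in H -> sd h false) ->
  \sum_(h in H) #|Fx b h| = (#|orbit 'P H @: [set v : Knn n | isL v == b]| * #|H|)%N.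
Proof.
move=> HH; rewrite -Frobenius_Cauchy.
  apply: eq_bigr => h Hh; apply: eq_card => v; rewrite !inE.
  congr (_ && _); by rewrite finset.sub1set inE.
apply/actsP => h Hh v; by rewrite !inE /= (HH h Hh).
Qed.

End Main.

Theorem lemma5 (R : realType) (n : nat) (G : {group {perm Knn n}})
  (pts : Knn n -> 'rV[R]_4) (arc : 'I_n -> 'I_n -> R -> 'rV[R]_4) :
  (forall g, g \in G -> is_aut g) ->
  (G \isog ('Alt_('I_4))%G)%g ->
  is_embedding pts arc ->
  induced_by_SO4 G pts arc ->
  forall g, g \in G -> #[g]%g = 2%N ->
  fixW g = 0%N -> (4 %| fixV g)%N.
Proof.
move=> Haut Hiso _ _ g Gg og fW.
case/isogP: Hiso => f injf imf.
have Ax : f g \in ('Alt_('I_4))%g by rewrite -imf mem_morphim.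
have ox : #[f g]%g = 2 by rewrite order_injm.
have [xH yH zH _ [Mxy Nyx Nzx Nzy Hall]] := A4_klein Ax ox.
have : C \in (f @* G)%g by rewrite imf Ceven.
case/morphimP => t Dt Gt Ct.
pose y := (g ^ t)%g; pose z := (y ^ t)%g.
have Gy : y \in G by rewrite groupJ.
have Gz : z \in G by rewrite groupJ.
have fy : f y = (f g ^ C)%g by rewrite /y morphJ // Ct.
have fz : f z = ((f g ^ C) ^ C)%g by rewrite /z morphJ // fy Ct.
have t3 : (t ^+ 3 = 1)%g.
  apply: (injmP injf); rewrite ?groupX ?group1 //.
  rewrite morphX // morph1 -Ct; exact: C3.
have gy : (g * y = z)%g.
  apply: (injmP injf); rewrite ?groupM ?groupV //.
  by rewrite morphM // fy fz.
have st : sd t false := sd3 (Haut t Gt) t3.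
have sg : sd g false.
  case: (side (Haut g Gg)) => // Sg.
  have Sy := sdJ Sg st; have Sz := sdJ Sy st.
  have := sdM Sg Sy; rewrite gy => Sz'.
  move=> v; exfalso; have := Sz v; rewrite Sz'; by case: (isL v).
have sy : sd y false := sdJ sg st.
have sz : sd z false := sdJ sy st.
have injG := injmP injf.
have Ng1 : g != 1%g.
  by apply/eqP => E; move: og; rewrite E order1.
have Ny1 : y != 1%g by rewrite /y conjg_eq1.
have Nz1 : z != 1%g by rewrite /z conjg_eq1.
have Ngy : g != y.
  apply/eqP => E; move/eqP: Nyx; apply; by rewrite -fy -E.
have Ngz : g != z.
  apply/eqP => E; move/eqP: Nzx; apply; by rewrite -fz -E.
have Nyz : y != z.
  apply/eqP => E; move/eqP: Nzy; apply; by rewrite -fz -fy -E.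
pose Hg := (f @*^-1 HA)%G.
have memHg : forall h, h \in Hg = [|| h == 1%g, h == g, h == y | h == z].
  move=> h; apply/morphpreP/idP.
    case=> Gh /Hall; rewrite -fz -fy -(morph1 f).
    case/or4P => /eqP E; apply/or4P;
      [constructor 1|constructor 2|constructor 3|constructor 4]; apply/eqP;
      apply: injG; rewrite ?group1 //.
  case/or4P => /eqP ->; split; rewrite ?group1 ?morph1 ?fy ?fz //.
have sumHg : forall F : {perm Knn n} -> nat,
    \sum_(h in Hg) F h = (F 1%g + F g + F y + F z)%N.
  move=> F.
  rewrite (bigD1 1%g) ?memHg ?eqxx //= (bigD1 g) ?memHg ?eqxx ?orbT ?Ng1 //=.
  rewrite (bigD1 y) ?memHg ?eqxx ?orbT ?Ny1 ?Ngy 1?eq_sym ?Ngy //=.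
  rewrite (bigD1 z) ?memHg ?eqxx ?orbT ?Nz1 /=; last first.
    by rewrite eq_sym Ngz eq_sym Nyz.
  rewrite big1 ?addn0 ?addnA //.
  move=> h /andP[/andP[/andP[/andP[Hh n1] ng] ny] nz]; exfalso.
  by move: Hh; rewrite memHg (negbTE n1) (negbTE ng) (negbTE ny) (negbTE nz).
have sdHg : forall h, h \in Hg -> sd h false.
  move=> h; rewrite memHg => /or4P[] /eqP->; rewrite ?sg ?sy ?sz //.
  move=> v; by rewrite perm1.
have cardHg : #|Hg| = 4.
  by rewrite -sum1_card sumHg.
have BV := burn true sdHg.
have BW := burn false sdHg.
rewrite sumHg cardHg -!fixV_Fx in BV.
rewrite sumHg cardHg -!fixW_Fx in BW.
have [f1V f1W] := fix1 n.
have eV1 : fixV y = fixV g by rewrite !fixV_Fx /y Fx_conj.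
have eV2 : fixV z = fixV g by rewrite !fixV_Fx /z Fx_conj // -!fixV_Fx.
have eW1 : fixW y = fixW g by rewrite !fixW_Fx /y Fx_conj.
have eW2 : fixW z = fixW g by rewrite !fixW_Fx /z Fx_conj // -!fixW_Fx.
rewrite f1V eV1 eV2 in BV.
rewrite f1W eW1 eW2 fW in BW.
have h1 : (4 %| n + fixV g + fixV g + fixV g)%N by rewrite BV dvdn_mull.
have h2 : (4 %| n)%N by move: BW; rewrite !addn0 => ->; exact: dvdn_mull.
rewrite -!addnA (dvdn_addr _ h2) in h1.
have h3 : (fixV g + (fixV g + fixV g) = 3 * fixV g)%N by rewrite !mulSn mul0n addn0.
by rewrite h3 Gauss_dvdr in h1.
Qed.
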